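(* Let $\mathcal F\subset 2^{\mathbb N}$ be a Furstenberg family, let $X_1,X_2$ be Polish topological vector spaces, and let $T_1\in\mathfrak L(X_1)$, $T_2\in\mathfrak L(X_2)$. If $T_1$ is $\mathcal F$-hypercyclic and $T_2$ is hereditarily $\mathcal F$-hypercyclic, then $T_1\oplus T_2$ is $\mathcal F$-hypercyclic on $X_1\times X_2$. If both $T_1$ and $T_2$ are hereditarily $\mathcal F$-hypercyclic, then $T_1\oplus T_2$ is hereditarily $\mathcal F$-hypercyclic.
   Context: A Furstenberg family is a family of non-empty subsets of $\mathbb N$ which is hereditary upwards ($A\in\mathcal F$, $A\subset A'$ implies $A'\in\mathcal F$). $\mathcal N_T(x,V):=\{n\in\mathbb N:T^nx\in V\}$. $T$ is $\mathcal F$-hypercyclic if there is $x$ with $\mathcal N_T(x,V)\in\mathcal F$ for every non-empty open $V$. $T$ is hereditarily $\mathcal F$-hypercyclic if for every countable family $(V_i)_{i\in I}$ of non-empty open sets and every family $(A_i)_{i\in I}\subset\mathcal F$, there is $x$ with $\mathcal N_T(x,V_i)\cap A_i\in\mathcal F$ for all $i\in I$. *)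

(* Defs.v *)
From HB Require Import structures.
From mathcomp Require Import all_boot all_order all_algebra.
From mathcomp Require Import all_classical all_reals all_analysis.
From mathcomp Require Import Rstruct Rstruct_topology.
From Stdlib Require Import Reals.

Set Implicit Arguments.
Unset Strict Implicit.
Unset Printing Implicit Defensive.

Import Order.TTheory GRing.Theory Num.Theory.
Local Open Scope classical_set_scope.

Definition furstenberg_family (F : set (set nat)) : Prop :=
  (forall A, F A -> A !=set0) /\
  (forall A A' : set nat, F A -> A `<=` A' -> F A').

Definition separable_space (T : topologicalType) : Prop :=
  exists D : set T, countable D /\ dense D.

Definition completely_metrizable (T : topologicalType) : Prop :=
  exists d : T -> T -> R,
    (forall x y, (0 <= d x y)%R) /\
    (forall x y, d x y = 0%R <-> x = y) /\
    (forall x y, d x y = d y x) /\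
    (forall x y z, (d x z <= d x y + d y z)%R) /\
    (forall A : set T, open A <->
       (forall x, A x -> exists e : R, (0 < e)%R /\ [set y | (d x y < e)%R] `<=` A)) /\
    (forall u : nat -> T,
       (forall e : R, (0 < e)%R -> exists N, forall m n,
            (N <= m)%N -> (N <= n)%N -> (d (u m) (u n) < e)%R) ->
       exists l, forall e : R, (0 < e)%R -> exists N, forall n,
            (N <= n)%N -> (d (u n) l < e)%R).

Definition polish_space (T : topologicalType) : Prop :=
  separable_space T /\ completely_metrizable T.

Definition return_set {X : Type} (T : X -> X) (x : X) (V : set X) : set nat :=
  [set n | V (iter n T x)].

Definition F_hypercyclic (F : set (set nat)) {X : topologicalType} (T : X -> X) : Prop :=
  exists x : X, forall V : set X, open V -> V !=set0 -> F (return_set T x V).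

Definition hereditarily_F_hypercyclic (F : set (set nat)) {X : topologicalType}
    (T : X -> X) : Prop :=
  forall (I : Type) (V : I -> set X) (A : I -> set nat),
    countable [set: I] ->
    (forall i, open (V i) /\ V i !=set0) ->
    (forall i, F (A i)) ->
    exists x : X, forall i, F (return_set T x (V i) `&` A i).

Definition op_dsum {X1 X2 : Type} (T1 : X1 -> X1) (T2 : X2 -> X2) : X1 * X2 -> X1 * X2 :=
  fun p => (T1 p.1, T2 p.2).

(* Main.v *)
Require Import Defs.
From HB Require Import structures.
From mathcomp Require Import all_boot all_order all_algebra.
From mathcomp Require Import all_classical all_reals all_analysis.
From mathcomp Require Import Rstruct Rstruct_topology.
From Stdlib Require Import Reals Lra.
Local Open Scope classical_set_scope.

Lemma pibase (X : topologicalType) (x0 : X) : polish_space X ->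
  exists B : nat * nat -> set X, (forall n, open (B n) /\ B n !=set0) /\
    (forall W, open W -> W !=set0 -> exists n, B n `<=` W).
Proof.
move=> [[D [cD dD]] [d [d0 [dE [dC [dT [dO _]]]]]]].
have ballO : forall q (r : R), (0 < r)%R -> open [set y | (d q y < r)%R].
  move=> q r r0; apply/dO => y /= hy; exists (r - d q y)%R; split.
    lra.
  move=> z /= hz; have := dT q y z; lra.
have ballN : forall q (r : R), (0 < r)%R -> [set y | (d q y < r)%R] !=set0.
  by move=> q r r0; exists q => /=; rewrite (proj2 (dE q q) erefl).
have [q0 Dq0] : D !=set0.
  have [q [_ Dq]] := dD setT (ex_intro _ x0 I) openT; by exists q.
have [f finj] := countable_injP _ cD.
have : forall i : nat, exists q, D q /\ (f q = i \/ forall q', D q' -> f q' <> i).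
  move=> i; have [[q [Dq fq]]|nq] := pselect (exists q, D q /\ f q = i).
    by exists q; split => //; left.
  exists q0; split => //; right => q' Dq' fq'; apply: nq; by exists q'.
move=> /choice [g hg].
have rpos : forall m, (0 < / (INR m + 1))%R.
  move=> m; apply: Rinv_0_lt_compat; have := pos_INR m; lra.
exists (fun n => [set y | (d (g n.1) y < / (INR n.2 + 1))%R]); split.
  by move=> n; split; [exact: ballO|exact: ballN].
move=> W oW [x Wx].
have [e [e0 sW]] := proj1 (dO W) oW x Wx.
have [m [hm m0]] := archimed_cor1 (e / 2) ltac:(lra).
have hr : (2 * / (INR m + 1) < e)%R.
  have : (/ (INR m + 1) < / INR m)%R.
    have : (0 < INR m)%R by apply: lt_0_INR.
    move=> hm0; apply: Rinv_lt_contravar; [nra | lra].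
  lra.
have [y [hy Dy]] := dD _ (ballN x _ (rpos m)) (ballO x _ (rpos m)).
exists (f y, m) => z /= hz; apply: sW => /=.
have [Dg [fg|nf]] := hg (f y); last by case: (nf y Dy).
have gy : g (f y) = y by apply: finj => //; rewrite inE.
rewrite gy in hz.
move: hy => /= hy; have := dT x y z; lra.
Qed.

Lemma prodsub (X1 X2 : topologicalType) (W : set (X1 * X2)) a b :
  open W -> W (a, b) -> exists U V, open U /\ U a /\ open V /\ V b /\ U `*` V `<=` W.
Proof.
move=> oW Wab.
have : nbhs (a, b) W by apply: open_nbhs_nbhs; split.
case=> [[P Q] /= [nP nQ] sPQ].
move: nP; rewrite nbhsE => -[U [oU Ua] sU].
move: nQ; rewrite nbhsE => -[V [oV Vb] sV].
exists U, V; do 4!split => //.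
move=> [x y] [/= Ux Vy]; apply: sPQ; split; [exact: sU|exact: sV].
Qed.

Lemma iter_dsum {X1 X2 : Type} (T1 : X1 -> X1) (T2 : X2 -> X2) n p :
  iter n (op_dsum T1 T2) p = (iter n T1 p.1, iter n T2 p.2).
Proof. by elim: n => [|n IH] /=; [case: p|rewrite IH]. Qed.

Theorem proposition4p1 (K : numFieldType) (F : set (set nat))
  (X1 X2 : topologicalLmodType K)
  (T1 : {linear X1 -> X1}) (T2 : {linear X2 -> X2}) :
  furstenberg_family F ->
  polish_space X1 -> polish_space X2 ->
  continuous T1 -> continuous T2 ->
  (F_hypercyclic F T1 -> hereditarily_F_hypercyclic F T2 ->
     F_hypercyclic F (op_dsum T1 T2)) /\
  (hereditarily_F_hypercyclic F T1 -> hereditarily_F_hypercyclic F T2 ->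
     hereditarily_F_hypercyclic F (op_dsum T1 T2)).
Proof.
move=> [Fne Fup] P1 P2 _ _; split.
- move=> [x1 hx1] H2.
  have [B1 [hB1 cB1]] := pibase _ x1 P1.
  have [B2 [hB2 cB2]] := pibase _ (@GRing.zero X2) P2.
  have [x2 hx2] := H2 ((nat*nat)*(nat*nat))%type (fun i => B2 i.2)
     (fun i => return_set T1 x1 (B1 i.1)) (countableP _)
     (fun i => hB2 i.2) (fun i => hx1 _ (proj1 (hB1 i.1)) (proj2 (hB1 i.1))).
  exists (x1, x2) => W oW [[a b] Wab].
  have [U [V [oU [Ua [oV [Vb sW]]]]]] := prodsub _ _ _ _ _ oW Wab.
  have [n1 s1] := cB1 U oU (ex_intro _ a Ua).
  have [n2 s2] := cB2 V oV (ex_intro _ b Vb).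
  apply: (Fup _ _ (hx2 (n1, n2))) => k [/= h2 h1].
  rewrite /return_set /= iter_dsum /=; apply: sW; split; [exact: s1|exact: s2].
- move=> H1 H2 I W A cI hW hA.
  have : forall i, exists UV : set X1 * set X2, open UV.1 /\ UV.1 !=set0 /\
      open UV.2 /\ UV.2 !=set0 /\ UV.1 `*` UV.2 `<=` W i.
    move=> i; have [oW [[a b] Wab]] := hW i.
    have [U [V [oU [Ua [oV [Vb sW]]]]]] := prodsub _ _ _ _ _ oW Wab.
    exists (U, V); split => //; split; first by exists a.
    split => //; split => //; by exists b.
  move=> /choice [g hg].
  have [x1 hx1] := H1 I (fun i => (g i).1) A cI
    (fun i => conj (proj1 (hg i)) (proj1 (proj2 (hg i)))) hA.
  have [x2 hx2] := H2 I (fun i => (g i).2) (fun i => return_set T1 x1 (g i).1 `&` A i) cI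
    (fun i => conj (proj1 (proj2 (proj2 (hg i)))) (proj1 (proj2 (proj2 (proj2 (hg i)))))) hx1.
  exists (x1, x2) => i; apply: (Fup _ _ (hx2 i)) => k [/= h2 [h1 hAk]]; split => //.
  rewrite /return_set /= iter_dsum /=.
  have [_ [_ [_ [_ sW]]]] := hg i; apply: sW; split => //.
Qed.
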